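(* Let $G$ be a finite group with $m^*(G) = |G|$. Then $G$ contains no non-trivial normal cyclic subgroups.
   Context: For $H \leq G$, $m_G(H) = |H|\,|C_G(H)|$ and $m^*(G) = \max\{ m_G(H) : H \leq G\}$. *)

(* Defs.v *)
From mathcomp Require Import all_boot all_fingroup.
Set Implicit Arguments. Unset Strict Implicit. Unset Printing Implicit Defensive.
Local Open Scope group_scope.

Definition mG (gT : finGroupType) (G H : {set gT}) : nat := #|H| * #|'C_G(H)|.

Definition mstar (gT : finGroupType) (G : {group gT}) : nat :=
  \max_(H : {group gT} | H \subset G) mG G H.

(* Main.v *)
Require Import Defs.
From mathcomp Require Import all_boot all_fingroup all_solvable.
Local Open Scope group_scope.

Lemma totient_lt n : 1 < n -> totient n < n.
Proof.
move=> n1; rewrite totient_count_coprime.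
case: n n1 => [//|n] n1.
rewrite big_nat_recl // /coprime gcdn0 /=.
have -> : (n.+1 == 1)%N = false by case: n n1.
rewrite add0n ltnS.
apply: (@leq_trans (\sum_(0 <= i < n) 1)%N).
  by apply: leq_sum => i _; exact: leq_b1.
by rewrite sum_nat_const_nat muln1 subn0.
Qed.

Theorem proposition6 (gT : finGroupType) (G : {group gT}) :
  mstar G = #|G| ->
  forall N : {group gT}, N <| G -> cyclic N -> N = 1%G.
Proof.
move=> hm N nNG cN.
have sNG := normal_sub nNG.
  
have nG := normal_norm nNG.
  
have hle : mG G N <= #|G|.
  by rewrite -hm; apply: (@leq_bigmax_cond _ (fun H : {group gT} => H \subset G) (fun H => mG G H) N).
have hidx : #|G : 'C_G(N)| <= #|Aut N|.
  have := subset_leq_card (Aut_conj_aut N G).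
  by rewrite card_morphim ker_conj_aut /= (setIidPr nG) indexgI.
have sCG : 'C_G(N) \subset G by apply: subsetIl.
case: (leqP #|N| 1) => [h1|h1].
  by rewrite -trivg_card_le1 in h1; apply: val_inj => /=; apply/eqP.
exfalso.
have ht := totient_lt _ h1.
rewrite -(card_Aut_cyclic cN) in ht.
have hlt : #|G : 'C_G(N)| < #|N| := leq_ltn_trans hidx ht.
move: hle; rewrite /mG -(Lagrange sCG) mulnC.
rewrite leq_pmul2l ?cardG_gt0 //.
by rewrite leqNgt hlt.
Qed.
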